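(* There exist a constant $C_A>0$ and a seminorm $\|\cdot\|_{M^i_A(p_0)}$ on $\mathbb R^K$ whose kernel $\{s:\|s\|_{M^i_A(p_0)}=0\}$ is exactly the indifference kernel $M^i_A(p_0)$, such that for every information structure $\mathbf q$, $$C_A\,\mathbb E\|\mathbf q-p_0\|\ \ge\ \mathrm{VoI}_A(\mathbf q)\ \ge\ \mathrm{VoI}_{A^\star(p_0)}(\mathbf q)\ \ge\ \mathbb E\|\mathbf q-p_0\|_{M^i_A(p_0)}.$$
   Context: Let $K$ be a finite set of states of nature. Signed measures on $K$ are identified with $\mathbb R^K$, with scalar product $\langle s,v\rangle=\sum_{k\in K}s_kv_k$ and Euclidean norm $\|\cdot\|$. Let $\Delta\subset\mathbb R^K$ be the simplex of probability distributions on $K$, and fix a prior $p_0\in\Delta$ with full support. The action set $A\subset\mathbb R^K$ is a nonempty compact convex set (the closed convex hull of the payoff vectors $(g(d,k))_{k\in K}$, $d\in D$, of a decision problem with compact $D$ and continuous $g$). For a nonempty compact convex $B\subset\mathbb R^K$, the value function is $v_B(p)=\max_{b\in B}\langle p,b\rangle$ for $p\in\Delta$, and the value of information of an information structure $\mathbf q$ is $\mathrm{VoI}_B(\mathbf q)=\mathbb E[v_B(\mathbf q)]-v_B(p_0)$. For $p\in\Delta$, $A^\star(p)=\{a\in A:\langle p,a'\rangle\le\langle p,a\rangle\ \forall a'\in A\}$ (a nonempty compact convex set). The indifference kernel at $p_0$ is the vector subspace $M^i_A(p_0)=[A^\star(p_0)-A^\star(p_0)]^\perp=\{s\in\mathbb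 R^K:\langle s,a\rangle=\langle s,a'\rangle\ \forall a,a'\in A^\star(p_0)\}$. An information structure is a random variable $\mathbf q$ on a probability space $(\Omega,\mathcal F,\mathbb P)$ with values in $\Delta$ and $\mathbb E[\mathbf q]=p_0$. *)

(* Defs.v *)
From mathcomp Require Import all_boot.
From Stdlib Require Import Reals ClassicalEpsilon.
Open Scope R_scope.

Definition vecK (K : finType) := K -> R.

Definition sumK {K : finType} (f : K -> R) : R :=
  foldr (fun k acc => f k + acc) 0 (enum K).

Definition dot {K : finType} (s v : vecK K) : R := sumK (fun k => s k * v k).
Definition norm {K : finType} (s : vecK K) : R := sqrt (dot s s).
Definition vsub {K : finType} (s v : vecK K) : vecK K := fun k => s k - v k.
Definition vadd {K : finType} (s v : vecK K) : vecK K := fun k => s k + v k.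
Definition vscale {K : finType} (c : R) (s : vecK K) : vecK K := fun k => c * s k.

Definition in_simplex {K : finType} (p : vecK K) : Prop :=
  (forall k, 0 <= p k) /\ sumK p = 1.

Definition full_support {K : finType} (p : vecK K) : Prop := forall k, 0 < p k.

(* nonempty compact convex subsets of R^K (compact = closed and bounded) *)
Definition nonempty {K : finType} (A : vecK K -> Prop) : Prop := exists a, A a.
Definition convex {K : finType} (A : vecK K -> Prop) : Prop :=
  forall a b t, A a -> A b -> 0 <= t <= 1 ->
    A (fun k => t * a k + (1 - t) * b k).
Definition closed_set {K : finType} (A : vecK K -> Prop) : Prop :=
  forall (u : nat -> vecK K) (a : vecK K),
    (forall m, A (u m)) -> (forall k, Un_cv (fun m => u m k) (a k)) -> A a.
Definition bounded_set {K : finType} (A : vecK K -> Prop) : Prop :=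
  exists M, forall a, A a -> norm a <= M.
Definition compact_convex {K : finType} (A : vecK K -> Prop) : Prop :=
  nonempty A /\ closed_set A /\ bounded_set A /\ convex A.

(* value function v_B(p) = max_{b in B} <p,b> (the maximum exists for B
   nonempty compact; it is selected by Hilbert's epsilon) *)
Definition value {K : finType} (B : vecK K -> Prop) (p : vecK K) : R :=
  epsilon (inhabits 0)
    (fun v => (exists b, B b /\ dot p b = v) /\ (forall b, B b -> dot p b <= v)).

Definition Astar {K : finType} (A : vecK K -> Prop) (p : vecK K) : vecK K -> Prop :=
  fun a => A a /\ forall a', A a' -> dot p a' <= dot p a.

Definition indiff_kernel {K : finType} (A : vecK K -> Prop) (p0 : vecK K) :
  vecK K -> Prop :=
  fun s => forall a a', Astar A p0 a -> Astar A p0 a' -> dot s a = dot s a'.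

Definition seminorm {K : finType} (N : vecK K -> R) : Prop :=
  (forall s t, N (vadd s t) <= N s + N t) /\
  (forall c s, N (vscale c s) = Rabs c * N s).

(* Probability spaces: a sample type Omega with an expectation operator E,
   required to be a normalized positive linear functional on bounded
   real random variables. *)
Definition bounded_rv {Omega : Type} (f : Omega -> R) : Prop :=
  exists M, forall w, Rabs (f w) <= M.

Definition expectation {Omega : Type} (E : (Omega -> R) -> R) : Prop :=
  (forall f g, bounded_rv f -> bounded_rv g ->
     E (fun w => f w + g w) = E f + E g) /\
  (forall c f, bounded_rv f -> E (fun w => c * f w) = c * E f) /\
  (forall f g, bounded_rv f -> bounded_rv g ->
     (forall w, f w <= g w) -> E f <= E g) /\
  E (fun _ => 1) = 1.

Definition info_structure {K : finType} {Omega : Type} (E : (Omega -> R) -> R)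
  (p0 : vecK K) (q : Omega -> vecK K) : Prop :=
  (forall w, in_simplex (q w)) /\ (forall k, E (fun w => q w k) = p0 k).

Definition VoI {K : finType} {Omega : Type} (E : (Omega -> R) -> R)
  (B : vecK K -> Prop) (p0 : vecK K) (q : Omega -> vecK K) : R :=
  E (fun w => value B (q w)) - value B p0.

(* Main.v *)
Require Import Defs.
From mathcomp Require Import all_boot all_order all_algebra.
From mathcomp Require Import Rstruct.
From Stdlib Require Import Reals Lra Lia List Classical FunctionalExtensionality ClassicalEpsilon.
Open Scope R_scope.
Import GRing.Theory.


Section SumK.
Variable K : finType.
Lemma sumK_plus (f g : K -> R) : sumK (fun k => f k + g k) = sumK f + sumK g.
Proof. rewrite /sumK; elim: (enum K) => /= [|x l IH]; lra. Qed.
Lemma sumK_minus (f g : K -> R) : sumK (fun k => f k - g k) = sumK f - sumK g.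
Proof. rewrite /sumK; elim: (enum K) => /= [|x l IH]; lra. Qed.
Lemma sumK_scal (c : R) (f : K -> R) : sumK (fun k => c * f k) = c * sumK f.
Proof. rewrite /sumK; elim: (enum K) => /= [|x l IH]; [lra| rewrite IH; ring]. Qed.
Lemma sumK_ext (f g : K -> R) : (forall k, f k = g k) -> sumK f = sumK g.
Proof. move=> H; rewrite /sumK; elim: (enum K) => /= [|x l IH]; [lra| rewrite IH H; lra]. Qed.
Lemma sumK_le (f g : K -> R) : (forall k, f k <= g k) -> sumK f <= sumK g.
Proof. move=> H; rewrite /sumK; elim: (enum K) => /= [|x l IH]; [lra| have := H x; lra]. Qed.
Lemma sumK_abs (f : K -> R) : Rabs (sumK f) <= sumK (fun k => Rabs (f k)).
Proof.
rewrite /sumK; elim: (enum K) => /= [|x l IH]; first by rewrite Rabs_R0; lra.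
by apply: Rle_trans (Rabs_triang _ _) _; lra.
Qed.
Lemma sumK_nonneg (f : K -> R) : (forall k, 0 <= f k) -> 0 <= sumK f.
Proof. move=> H; rewrite /sumK; elim: (enum K) => /= [|x l IH]; [lra| have := H x; lra]. Qed.
Lemma sumK_term (f : K -> R) k : (forall k, 0 <= f k) -> f k <= sumK f.
Proof.
move=> H; rewrite /sumK; have : k \in enum K by rewrite mem_enum.
elim: (enum K) => //= x l IH; rewrite seq.in_cons => /orP [/eqP ->|/IH]; 
 [ | have := H x]; (have : 0 <= foldr (fun k0 acc => f k0 + acc) 0 l by
   elim: l {IH} => /= [|y l' IH']; [lra | have := H y; lra]); lra.
Qed.
End SumK.

Lemma dot_vsub (K : finType) (s a b : vecK K) : dot s (vsub a b) = dot s a - dot s b.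
Proof. rewrite /dot -sumK_minus; apply: sumK_ext => k; rewrite /vsub; ring. Qed.

Section LA.
Variable K : finType.
Local Open Scope ring_scope.

Lemma sumK_big (f : K -> R) : sumK f = \sum_(k : K) f k.
Proof.
rewrite /sumK -big_enum /=.
elim: (enum K) => [|x l IH]; first by rewrite big_nil.
by rewrite big_cons /= IH.
Qed.

Definition rv (v : vecK K) : 'rV[R]_#|K| := \row_i v (enum_val i).

Lemma dot_mx (s v : vecK K) : dot s v = (rv v *m (rv s)^T) 0 0.
Proof.
have -> : (rv v *m (rv s)^T) 0 0 = \sum_j (rv v 0 j * (rv s)^T j 0).
  by rewrite [LHS]mxE.
rewrite /dot sumK_big.
rewrite (big_enum_val (fun k => s k * v k)%R) /=.
apply: eq_bigr => i _; rewrite !mxE.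
by rewrite mulrC.
Qed.

Definition U (a1 : vecK K) (F : list (vecK K)) : 'M[R]_#|K| :=
  foldr (fun a M => (rv (vsub a a1) + M)%MS) 0 F.

Lemma U_ker s a1 F : Forall (fun a => dot s a = dot s a1) F ->
  (U a1 F <= kermx (rv s)^T)%MS.
Proof.
elim: F => [|a F IH] H /=; first by apply: sub0mx.
inversion H; subst.
rewrite addsmx_sub; apply/andP; split; last by apply: IH.
apply/sub_kermxP; apply/matrixP => i j; rewrite !ord1 -dot_mx mxE dot_vsub H2.
exact: Rminus_diag.
Qed.

Definition good (S : vecK K -> Prop) a1 F := forall s, Forall (fun a => dot s a = dot s a1) F ->
  forall a, S a -> dot s a = dot s a1.

Lemma rank_step (S : vecK K -> Prop) a1 : forall r : nat,
  (exists F, Forall S F /\ good S a1 F) \/ (exists F, Forall S F /\ (r <= \rank (U a1 F))%nat).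
Proof.
elim=> [|r [IH|[F [HF Hr]]]]; first by right; exists nil; split.
- by left.
case: (classic (good S a1 F)) => Hg; first by left; exists F.
right.
have [s [Hs [a [Sa Ha]]]] : exists s, Forall (fun a => dot s a = dot s a1) F /\
   exists a, S a /\ dot s a <> dot s a1.
  apply: NNPP => C; apply: Hg => s Hs a Sa; apply: NNPP => D; apply: C.
  by exists s; split=> //; exists a.
exists (a :: F); split; first by constructor.
have Hn : ~~ (rv (vsub a a1) <= U a1 F)%MS.
  apply/negP => Hsub.
  have /sub_kermxP Hk := submx_trans Hsub (@U_ker s a1 F Hs).
  apply: Ha; have := f_equal (fun M : 'M[R]_1 => M 0 0) Hk.
  rewrite /= -dot_mx mxE dot_vsub => E.
  have E2 : Rminus (dot s a) (dot s a1) = R0 := E.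
  lra.
have := mxrank_leqif_sup (addsmxSr (rv (vsub a a1)) (U a1 F)).
move/ltn_leqif; rewrite addsmx_sub (negbTE Hn) /= => Hlt.
exact: (leq_ltn_trans Hr Hlt).
Qed.

Lemma span_family (S : vecK K -> Prop) a1 : exists F, Forall S F /\ good S a1 F.
Proof.
case: (rank_step S a1 #|K|.+1) => // [[F [_ H]]].
by have := rank_leq_col (U a1 F); rewrite leqNgt H.
Qed.
End LA.

Definition lsum {T : Type} (f : T -> R) (l : list T) : R := foldr (fun a acc => f a + acc) 0 l.

Section Lsum.
Variable T : Type.
Implicit Types (f g : T -> R) (l : list T).
Lemma lsum_plus f g l : lsum (fun a => f a + g a) l = lsum f l + lsum g l.
Proof. elim: l => /= [|x l IH]; rewrite /lsum /=; [lra|rewrite -/(lsum _ l) -/(lsum f l) -/(lsum g l) IH; ring]. Qed.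
Lemma lsum_minus f g l : lsum (fun a => f a - g a) l = lsum f l - lsum g l.
Proof. elim: l => /= [|x l IH]; rewrite /lsum /=; [lra|rewrite -/(lsum _ l) -/(lsum f l) -/(lsum g l) IH; ring]. Qed.
Lemma lsum_scal c f l : lsum (fun a => c * f a) l = c * lsum f l.
Proof. elim: l => /= [|x l IH]; rewrite /lsum /=; [lra|rewrite -/(lsum _ l) -/(lsum f l) IH; ring]. Qed.
Lemma lsum_ext f g l : (forall a, f a = g a) -> lsum f l = lsum g l.
Proof. move=> H; elim: l => /= [|x l IH]; rewrite /lsum /=; [lra|rewrite -/(lsum _ l) -/(lsum g l) IH H; lra]. Qed.
Lemma lsum_ext_in f g l : Forall (fun a => f a = g a) l -> lsum f l = lsum g l.
Proof. elim: l => /= [|x l IH] H; rewrite /lsum /=; first lra. inversion H; subst.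
rewrite -/(lsum _ l) -/(lsum g l) IH //; lra. Qed.
Lemma lsum_le f g l : (forall a, f a <= g a) -> lsum f l <= lsum g l.
Proof. move=> H; elim: l => /= [|x l IH]; rewrite /lsum /=; [lra|rewrite -/(lsum _ l) -/(lsum g l); have := H x; lra]. Qed.
Lemma lsum_nonneg f l : (forall a, 0 <= f a) -> 0 <= lsum f l.
Proof. move=> H; elim: l => /= [|x l IH]; rewrite /lsum /=; [lra|rewrite -/(lsum _ l); have := H x; lra]. Qed.
Lemma lsum_const_in f l d : Forall (fun a => f a = d) l -> lsum f l = INR (size l) * d.
Proof. elim: l => [|x l IH] H; first by rewrite /lsum /=; lra. inversion H; subst.
have -> : size (x :: l) = S (size l) by []. rewrite S_INR /lsum [foldr _ _ _]/= -/(lsum f l) IH //; lra. Qed.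
Lemma lsum_zero f l : (forall a, 0 <= f a) -> lsum f l = 0 -> Forall (fun a => f a = 0) l.
Proof. move=> H; elim: l => /= [|x l IH]; rewrite /lsum /= => E; first by constructor.
rewrite -/(lsum _ l) in E. have := lsum_nonneg f l H. have := H x => h1 h2.
constructor; [lra| apply: IH; lra]. Qed.
Lemma lsum_le_in f g l : Forall (fun a => f a <= g a) l -> lsum f l <= lsum g l.
Proof. elim: l => /= [|x l IH] H; rewrite /lsum /=; first lra. inversion H; subst.
rewrite -/(lsum _ l) -/(lsum g l); have := IH H3; lra. Qed.
End Lsum.

Lemma sumK_lsum (K : finType) (f : K -> R) : sumK f = lsum f (enum K).
Proof. by []. Qed.

Section Expect.
Variable Omega : Type.
Variable E : (Omega -> R) -> R.
Hypothesis HE : expectation E.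

Lemma bounded_const c : bounded_rv (fun _ : Omega => c).
Proof. by exists (Rabs c) => w; lra. Qed.
Lemma bounded_plus f g : bounded_rv f -> bounded_rv g -> bounded_rv (fun w : Omega => f w + g w).
Proof. move=> [M1 H1] [M2 H2]; exists (M1 + M2) => w.
apply: Rle_trans (Rabs_triang _ _) _; have := H1 w; have := H2 w; lra. Qed.
Lemma bounded_scal c f : bounded_rv f -> bounded_rv (fun w : Omega => c * f w).
Proof. move=> [M1 H1]; exists (Rabs c * M1) => w; rewrite Rabs_mult.
apply: Rmult_le_compat_l; [apply: Rabs_pos | apply: H1]. Qed.
Lemma bounded_minus f g : bounded_rv f -> bounded_rv g -> bounded_rv (fun w : Omega => f w - g w).
Proof. move=> [M1 H1] [M2 H2]; exists (M1 + M2) => w.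
apply: Rle_trans (Rabs_triang _ _) _; rewrite Rabs_Ropp; have := H1 w; have := H2 w; lra. Qed.
Lemma bounded_abs f : bounded_rv f -> bounded_rv (fun w : Omega => Rabs (f w)).
Proof. move=> [M1 H1]; exists M1 => w; rewrite Rabs_Rabsolu; apply: H1. Qed.
Lemma bounded_lsum {T} (g : Omega -> T -> R) l : (forall a, bounded_rv (fun w => g w a)) ->
  bounded_rv (fun w => lsum (g w) l).
Proof. move=> H; elim: l => [|x l IH]; first by apply: bounded_const.
exact (bounded_plus _ _ (H x) IH). Qed.

Lemma E_plus f g : bounded_rv f -> bounded_rv g -> E (fun w => f w + g w) = E f + E g.
Proof. by case: HE => h _; apply: h. Qed.
Lemma E_scal c f : bounded_rv f -> E (fun w => c * f w) = c * E f.
Proof. by case: HE => _ [h _]; apply: h. Qed.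
Lemma E_le f g : bounded_rv f -> bounded_rv g -> (forall w, f w <= g w) -> E f <= E g.
Proof. by case: HE => _ [_ [h _]]; apply: h. Qed.
Lemma E_const c : E (fun _ => c) = c.
Proof.
have -> : (fun _ : Omega => c) = (fun _ => c * 1) by apply: functional_extensionality => w; ring.
rewrite E_scal; last by apply: bounded_const.
by case: HE => _ [_ [_ ->]]; ring.
Qed.
Lemma E_lsum {T} (g : Omega -> T -> R) l : (forall a, bounded_rv (fun w => g w a)) ->
  E (fun w => lsum (g w) l) = lsum (fun a => E (fun w => g w a)) l.
Proof. move=> H; elim: l => [|x l IH]; first by apply: E_const.
rewrite /lsum /= -/(lsum _ l) -IH E_plus //; exact: bounded_lsum. Qed.
End Expect.

Section Vec.
Variable K : finType.
Implicit Types (s a b p : vecK K).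

Lemma dot_comm s t : dot s t = dot t s.
Proof. apply: sumK_ext => k; ring. Qed.
Lemma dot_vsub_l a b s : dot (vsub a b) s = dot a s - dot b s.
Proof. rewrite /dot -sumK_minus; apply: sumK_ext => k; rewrite /vsub; ring. Qed.
Lemma dot_vadd_l a b s : dot (vadd a b) s = dot a s + dot b s.
Proof. rewrite /dot -sumK_plus; apply: sumK_ext => k; rewrite /vadd; ring. Qed.
Lemma dot_vscale_l c a s : dot (vscale c a) s = c * dot a s.
Proof. rewrite /dot -sumK_scal; apply: sumK_ext => k; rewrite /vscale; ring. Qed.
Lemma dot_comb p a b t : dot p (fun k => t * a k + (1 - t) * b k) = t * dot p a + (1 - t) * dot p b.
Proof. rewrite /dot -!sumK_scal -sumK_plus; apply: sumK_ext => k; ring. Qed.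
Lemma dot_nonneg s : 0 <= dot s s.
Proof. apply: sumK_nonneg => k; nra. Qed.
Lemma norm_nonneg s : 0 <= norm s.
Proof. exact: sqrt_pos. Qed.
Lemma coord_sq_le s k : s k * s k <= dot s s.
Proof. apply: (sumK_term _ (fun k => s k * s k) k) => j; rewrite /=; nra. Qed.
Lemma coord_le_norm s k : Rabs (s k) <= norm s.
Proof.
rewrite /norm -sqrt_Rsqr_abs; apply: sqrt_le_1_alt; rewrite /Rsqr; exact: coord_sq_le.
Qed.
Lemma dot_le_sq s M : 0 <= M -> norm s <= M -> dot s s <= M * M.
Proof.
move=> HM H; rewrite -(sqrt_sqrt (dot s s) (dot_nonneg s)).
have := norm_nonneg s; rewrite /norm in H * => h; nra.
Qed.
Lemma dot_abs_bound s b al be : (forall k, Rabs (s k) <= al) -> (forall k, Rabs (b k) <= be) ->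
  Rabs (dot s b) <= sumK (fun _ : K => al * be).
Proof.
move=> Hs Hb; apply: Rle_trans (sumK_abs _ _) _; apply: sumK_le => k.
rewrite Rabs_mult; apply: Rmult_le_compat; [apply: Rabs_pos|apply: Rabs_pos|apply: Hs|apply: Hb].
Qed.
Lemma dot_cv p (u : nat -> vecK K) a : (forall k, Un_cv (fun n => u n k) (a k)) ->
  Un_cv (fun n => dot p (u n)) (dot p a).
Proof.
move=> H; rewrite /dot /sumK; elim: (enum K) => /= [|x l IH].
- by move=> e he; exists 0%nat => n _; rewrite /Rdist Rminus_diag Rabs_R0.
- apply: CV_plus => //; apply: CV_mult => //.
  by move=> e he; exists 0%nat => n _; rewrite /Rdist Rminus_diag Rabs_R0.
Qed.
End Vec.
Arguments dot_comm {K}. Arguments dot_vsub_l {K}. Arguments dot_vadd_l {K}. Arguments dot_vscale_l {K}. Arguments dot_comb {K}. Arguments dot_nonneg {K}. Arguments norm_nonneg {K}. Arguments coord_sq_le {K}. Arguments coord_le_norm {K}. Arguments dot_le_sq {K}. Arguments dot_abs_bound {K}. Arguments dot_cv {K}.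

Lemma lub_ex (P : R -> Prop) : (exists x, P x) -> (exists M, forall x, P x -> x <= M) ->
  exists S, (forall x, P x -> x <= S) /\ (forall y, (forall x, P x -> x <= y) -> S <= y).
Proof.
move=> Hne Hb; have [S [H1 H2]] := completeness P Hb Hne.
by exists S; split; [exact: H1 | exact: H2].
Qed.

Definition en (n : nat) : R := / (INR n + 1).
Lemma en_pos n : 0 < en n.
Proof. rewrite /en; apply: Rinv_0_lt_compat; have := pos_INR n; lra. Qed.
Lemma en_anti n m : (n <= m)%coq_nat -> en m <= en n.
Proof. move=> H; rewrite /en; apply: Rinv_le_contravar; first by have := pos_INR n; lra.
have := le_INR _ _ H; lra. Qed.
Lemma en_small e : 0 < e -> exists N, en N < e.
Proof.
move=> he; have [N HN] := INR_unbounded (/ e); exists N; rewrite /en.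
have h1 : 0 < / e by apply: Rinv_0_lt_compat.
rewrite -(Rinv_inv e); apply: Rinv_lt_contravar; [nra| lra].
Qed.
Lemma en_cv : Un_cv en 0.
Proof.
move=> e he; have [N HN] := en_small e he; exists N => n Hn.
rewrite /Rdist Rminus_0_r Rabs_pos_eq; last by have := en_pos n; lra.
have := en_anti _ _ Hn; lra.
Qed.

Lemma parallelogram (K : finType) (x y : vecK K) :
  dot (vsub x y) (vsub x y) =
  2 * dot x x + 2 * dot y y - 4 * dot (fun k => / 2 * x k + (1 - / 2) * y k) (fun k => / 2 * x k + (1 - / 2) * y k).
Proof. rewrite /dot -!sumK_scal -sumK_plus -sumK_minus; apply: sumK_ext => k; rewrite /vsub; field. Qed.

Lemma sq_lt_abs x e : 0 < e -> x * x < e * e -> Rabs x < e.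
Proof.
move=> he h; apply: Rnot_le_lt => h2.
have : e * e <= Rabs x * Rabs x by apply: Rmult_le_compat; lra.
rewrite -Rabs_mult Rabs_pos_eq; nra.
Qed.

Lemma attain (K : finType) (B : vecK K -> Prop) (p : vecK K) : compact_convex B ->
  exists b, B b /\ forall b', B b' -> dot p b' <= dot p b.
Proof.
case=> [[a0 Ha0] [Hcl [[M HM] Hcv]]].
have HM0 : 0 <= M by have := HM a0 Ha0; have := norm_nonneg a0; lra.
have HMk : forall a k, B a -> Rabs (a k) <= M.
  by move=> a k Ha; apply: Rle_trans (coord_le_norm a k) (HM a Ha).
pose al := sumK (fun k => Rabs (p k)).
have Hal : forall k, Rabs (p k) <= al.
  by move=> k; apply: (sumK_term _ (fun k => Rabs (p k))) => j; apply: Rabs_pos.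
have [S [HS1 HS2]] : exists S, (forall x, (exists a, B a /\ x = dot p a) -> x <= S) /\
   (forall y, (forall x, (exists a, B a /\ x = dot p a) -> x <= y) -> S <= y).
  apply: lub_ex; first by exists (dot p a0), a0.
  exists (sumK (fun _ : K => al * M)) => x [a [Ha ->]].
  apply: Rle_trans (Rle_abs _) _; apply: dot_abs_bound => // k; exact: HMk.
have HS1' : forall a, B a -> dot p a <= S by move=> a Ha; apply: HS1; exists a.
pose T n a := B a /\ S - en n <= dot p a.
have HT : forall n, exists a, T n a.
  move=> n; apply: NNPP => C.
  have : S <= S - en n.
    apply: HS2 => x [a [Ha ->]]; apply: Rlt_le; apply: Rnot_le_lt => h; apply: C.
    by exists a; split.
  have := en_pos n; lra.
have HTm : forall n m a, (n <= m)%coq_nat -> T m a -> T n a.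
  move=> n m a Hnm [Ha h]; split=> //; have := en_anti _ _ Hnm; lra.
have Hglb : forall n, exists d, (forall a, T n a -> d <= dot a a) /\
    (forall y, (forall a, T n a -> y <= dot a a) -> y <= d).
  move=> n.
  have ne : exists x, exists a, T n a /\ x = - dot a a.
    by have [a Ha] := HT n; exists (- dot a a), a.
  have bd : exists M0, forall x, (exists a, T n a /\ x = - dot a a) -> x <= M0.
    by exists 0 => x [a [_ ->]]; have := dot_nonneg a; lra.
  have [L [HL1 HL2]] := lub_ex _ ne bd.
  exists (- L); split.
  + by move=> a Ha; have := HL1 (- dot a a) (ex_intro _ a (conj Ha erefl)); lra.
  + move=> y Hy; have : L <= - y by apply: HL2 => x [a [Ha ->]]; have := Hy a Ha; lra.
    lra.
pose d n := epsilon (inhabits 0) (fun d => (forall a, T n a -> d <= dot a a) /\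
    (forall y, (forall a, T n a -> y <= dot a a) -> y <= d)).
have Hd : forall n, (forall a, T n a -> d n <= dot a a) /\
    (forall y, (forall a, T n a -> y <= dot a a) -> y <= d n).
  by move=> n; apply: (epsilon_spec (inhabits 0) _ (Hglb n)).
have Hd2 : forall n e, 0 < e -> exists a, T n a /\ dot a a < d n + e.
  move=> n e he; apply: NNPP => C.
  have : d n + e <= d n.
    apply: (proj2 (Hd n)) => a Ha; apply: Rnot_lt_le => h; apply: C; by exists a.
  lra.
have Hdm : forall n m, (n <= m)%coq_nat -> d n <= d m.
  move=> n m Hnm; apply: (proj2 (Hd m)) => a Ha; apply: (proj1 (Hd n)); exact: HTm Ha.
have Hdb : forall n, d n <= M * M.
  move=> n; have [a Ha] := HT n; apply: Rle_trans (proj1 (Hd n) a Ha) _.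
  apply: dot_le_sq => //; exact: HM (proj1 Ha).
have [D [HD1 HD2]] : exists D, (forall x, (exists n, x = d n) -> x <= D) /\
   (forall y, (forall x, (exists n, x = d n) -> x <= y) -> D <= y).
  apply: lub_ex; first by exists (d 0%nat), 0%nat.
  by exists (M * M) => x [n ->].
have HD1' : forall n, d n <= D by move=> n; apply: HD1; exists n.
have HD3 : forall e, 0 < e -> exists n, D - e < d n.
  move=> e he; apply: NNPP => C.
  have : D <= D - e.
    apply: HD2 => x [n ->]; apply: Rnot_lt_le => h; apply: C; by exists n.
  lra.
pose a n := epsilon (inhabits a0) (fun a => T n a /\ dot a a < d n + en n).
have Ha : forall n, T n (a n) /\ dot (a n) (a n) < d n + en n.
  by move=> n; apply: (epsilon_spec (inhabits a0) _ (Hd2 n (en n) (en_pos n))).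
have Hpar : forall n m, (n <= m)%coq_nat ->
    dot (vsub (a n) (a m)) (vsub (a n) (a m)) <= 2 * (D - d n) + 4 * en n.
  move=> n m Hnm; rewrite parallelogram.
  have [[Ban Tn] Hn] := Ha n; have [[Bam Tm] Hm] := Ha m.
  have Hmid : T n (fun k => / 2 * a n k + (1 - / 2) * a m k).
    split; first by apply: Hcv => //; lra.
    rewrite dot_comb; have := en_anti _ _ Hnm; lra.
  have := proj1 (Hd n) _ Hmid; have := HD1' m; have := en_anti _ _ Hnm; lra.
have Hcau : forall k, Cauchy_crit (fun n => a n k).
  move=> k e he.
  have [N1 HN1] := HD3 (e * e / 4) ltac:(nra).
  have [N2 HN2] := en_small (e * e / 8) ltac:(nra).
  exists (Nat.max N1 N2) => n m Hn Hm.
  have key : forall n m, (Nat.max N1 N2 <= n)%coq_nat -> (n <= m)%coq_nat ->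
      Rabs (a n k - a m k) < e.
    move=> n' m' Hn' Hnm; apply: sq_lt_abs => //.
    have h1 := coord_sq_le (vsub (a n') (a m')) k; rewrite /vsub in h1.
    have h2 := Hpar _ _ Hnm.
    have h3 := Hdm N1 n' ltac:(lia). have h4 := en_anti N2 n' ltac:(lia).
    rewrite /vsub in h2; lra.
  rewrite /Rdist; case: (Nat.le_ge_cases n m) => h.
  + by apply: key => //; lia.
  + by rewrite Rabs_minus_sym; apply: key => //; lia.
pose ast k := proj1_sig (R_complete _ (Hcau k)).
have Hast : forall k, Un_cv (fun n => a n k) (ast k) by move=> k; exact: proj2_sig (R_complete _ (Hcau k)).
have Bast : B ast by apply: (Hcl a) => // n; exact: (proj1 (proj1 (Ha n))).
exists ast; split => // b' Hb'.
apply: Rle_trans (HS1' _ Hb') _.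
apply: (@Rle_cv_lim (fun n => S - en n) (fun n => dot p (a n)) S (dot p ast)).
- by move=> n; exact: (proj2 (proj1 (Ha n))).
- by have := CV_minus (fun _ => S) en S 0 ltac:(move=> e he; exists 0%nat => n _; rewrite /Rdist Rminus_diag Rabs_R0; lra) en_cv; rewrite Rminus_0_r.
- exact: dot_cv.
Qed.

Lemma value_spec (K : finType) (B : vecK K -> Prop) p : compact_convex B ->
  (exists b, B b /\ dot p b = value B p) /\ (forall b, B b -> dot p b <= value B p).
Proof.
move=> H; have [b [Hb Hmax]] := attain _ B p H.
rewrite /value; apply: (epsilon_spec (inhabits 0) (fun v => (exists b, B b /\ dot p b = v) /\ (forall b, B b -> dot p b <= v))).
by exists (dot p b); split; [exists b | exact: Hmax].
Qed.

Lemma astar_cc (K : finType) (A : vecK K -> Prop) p0 : compact_convex A -> compact_convex (Astar A p0).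
Proof.
move=> hA; have [b [Hb Hmax]] := attain _ A p0 hA.
case: hA => [_ [Hcl [[M HM] Hcv]]].
split; first by exists b.
split.
  move=> u a Hu Hcv'; split; first by apply: (Hcl u) => // m; exact: (proj1 (Hu m)).
  move=> a' Ha'; apply: (@Rle_cv_lim (fun _ => dot p0 a') (fun m => dot p0 (u m))).
  - by move=> m; exact: (proj2 (Hu m)).
  - by move=> e he; exists 0%nat => n _; rewrite /Rdist Rminus_diag Rabs_R0.
  - exact: dot_cv.
split; first by exists M => a [Ha _]; exact: HM.
move=> x y t [Hx Mx] [Hy My] Ht; split; first by apply: Hcv.
move=> a' Ha'; rewrite dot_comb; have := Mx a' Ha'; have := My a' Ha'; nra.
Qed.

Lemma lsum_constf {T : Type} (l : list T) d : lsum (fun _ => d) l = INR (size l) * d.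
Proof. by apply: lsum_const_in; apply/Forall_forall. Qed.

Lemma key_ineq {T : Type} (f : T -> R) (l : list T) v : (0 < INR (size l)) ->
  Forall (fun a => f a <= v) l ->
  / (2 * INR (size l)) * lsum (fun a => Rabs (f a - / INR (size l) * lsum f l)) l <=
  v - / INR (size l) * lsum f l.
Proof.
move=> hn Hl; set n := INR (size l) in hn *; set m := / n * lsum f l.
have Hsum : lsum f l <= n * v by rewrite -lsum_constf; apply: lsum_le_in.
have Hmv : m <= v.
  rewrite /m; apply: (Rmult_le_reg_l n) => //; rewrite -Rmult_assoc Rinv_r; lra.
have Hy : lsum (fun a => f a - m) l = 0.
  rewrite lsum_minus lsum_constf /m -/n; field; lra.
have H2 : lsum (fun a => Rabs (f a - m) + (f a - m)) l <= lsum (fun _ => 2 * (v - m)) l.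
  apply: lsum_le_in; elim: Hl => [|x l' hx _ IH]; constructor => //.
  case: (Rle_or_lt 0 (f x - m)) => h; [rewrite Rabs_pos_eq //| rewrite Rabs_left //]; lra.
rewrite lsum_plus Hy lsum_constf -/n in H2.
have hinv : 0 < / (2 * n) by apply: Rinv_0_lt_compat; lra.
apply: (Rmult_le_reg_l (2 * n)); first lra.
rewrite -Rmult_assoc Rinv_r; lra.
Qed.

Theorem theorem3p4 (K : finType) (A : vecK K -> Prop) (p0 : vecK K) :
  compact_convex A -> in_simplex p0 -> full_support p0 ->
  exists (C : R) (N : vecK K -> R),
    0 < C /\ seminorm N /\
    (forall s, N s = 0 <-> indiff_kernel A p0 s) /\
    forall (Omega : Type) (E : (Omega -> R) -> R) (q : Omega -> vecK K),
      expectation E -> info_structure E p0 q ->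
      C * E (fun w => norm (vsub (q w) p0)) >= VoI E A p0 q /\
      VoI E A p0 q >= VoI E (Astar A p0) p0 q /\
      VoI E (Astar A p0) p0 q >= E (fun w => N (vsub (q w) p0)).
Proof.
move=> hA Hp0 _.
have hS := astar_cc _ A p0 hA.
have [a1 Ha1] := proj1 hS.
set c := dot p0 a1.
have Hc : forall a, Astar A p0 a -> dot p0 a = c.
  move=> a [Ha Ma]; have := Ma a1 (proj1 Ha1); have := proj2 Ha1 a Ha; rewrite /c; lra.
have [F [HF Hgood]] := span_family K (Astar A p0) a1.
set L := a1 :: F.
have HL : Forall (Astar A p0) L by constructor.
set n := INR (size L).
have hn : 0 < n by rewrite /n /L; have -> : size (a1 :: F) = S (size F) by []; rewrite S_INR; have := pos_INR (size F); lra.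
pose mS (s : vecK K) := / n * lsum (fun a => dot s a) L.
pose N (s : vecK K) := / (2 * n) * lsum (fun a => Rabs (dot s a - mS s)) L.
have hinv2 : 0 < / (2 * n) by apply: Rinv_0_lt_compat; lra.
have [M HM] := proj1 (proj2 (proj2 hA)).
have HM0 : 0 <= M by have [a0 Ha0] := proj1 hA; have := HM a0 Ha0; have := norm_nonneg a0; lra.
have HMk : forall a k, A a -> Rabs (a k) <= M.
  by move=> a k Ha; apply: Rle_trans (coord_le_norm a k) (HM a Ha).
set CM := sumK (fun _ : K => M).
have HCM : 0 <= CM by apply: sumK_nonneg.
exists (CM + 1), N.
split; first lra.
have mS_add : forall s t, mS (vadd s t) = mS s + mS t.
  move=> s t; rewrite /mS -Rmult_plus_distr_l -lsum_plus; congr (_ * _).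
  by apply: lsum_ext => a; rewrite dot_vadd_l.
have mS_scale : forall x s, mS (vscale x s) = x * mS s.
  move=> x s; rewrite /mS.
  transitivity (/ n * lsum (fun a => x * dot s a) L); last by rewrite lsum_scal -!Rmult_assoc (Rmult_comm (/ n) x).
  by congr (_ * _); apply: lsum_ext => a; exact: dot_vscale_l.
split.
  split.
  - move=> s t; rewrite /N -Rmult_plus_distr_l -lsum_plus; apply: Rmult_le_compat_l; first lra.
    apply: lsum_le => a; rewrite dot_vadd_l mS_add.
    replace (dot s a + dot t a - (mS s + mS t)) with ((dot s a - mS s) + (dot t a - mS t)) by ring.
    exact: Rabs_triang.
  - move=> x s; rewrite /N mS_scale.
    transitivity (/ (2 * n) * lsum (fun a => Rabs x * Rabs (dot s a - mS s)) L); last by rewrite lsum_scal; ring.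
    congr (_ * _); apply: lsum_ext => a; rewrite dot_vscale_l -Rabs_mult; congr Rabs; ring.
split.
  move=> s; split.
  - move=> H0.
    have Hz : lsum (fun a => Rabs (dot s a - mS s)) L = 0.
      have h := H0; rewrite /N in h; apply: (Rmult_eq_reg_l (/ (2 * n))); lra.
    have Hall := lsum_zero _ _ _ (fun a => Rabs_pos _) Hz.
    have Hall' : Forall (fun a => dot s a = mS s) L.
      elim: Hall {Hz H0} => [|x l hx _ IH]; constructor => //.
      apply: NNPP => C; have h : dot s x - mS s <> 0 by move=> h; apply: C; lra.
      exact: (Rabs_no_R0 _ h hx).
    inversion Hall' as [|x l h1 h2]; subst.
    have Hw : forall a, Astar A p0 a -> dot s a = dot s a1.
      apply: Hgood; elim: h2 {Hall Hall' HL} => [|x l hx _ IH]; constructor => //; lra.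
    move=> a a' Ha Ha'; by rewrite (Hw a Ha) (Hw a' Ha').
  - move=> Hind.
    have Hall : Forall (fun a => dot s a = dot s a1) L.
      by apply/Forall_forall => x hx; apply: Hind => //; move/Forall_forall: HL; apply.
    have Hm : mS s = dot s a1.
      rewrite /mS (lsum_const_in _ _ _ _ Hall) -/n -Rmult_assoc Rinv_l ?Rmult_1_l //; exact: Rgt_not_eq _ _ hn.
    rewrite /N; cbv beta; rewrite (lsum_ext_in _ _ (fun _ => 0)); first by rewrite lsum_constf; ring.
    apply/Forall_forall => x hx; move/Forall_forall: Hall => /(_ x hx) ->.
    rewrite Hm Rminus_diag; exact: Rabs_R0.
move=> Omega E q HE [Hq Hmean].
have Hqk : forall w k, 0 <= q w k <= 1.
  move=> w k; have [h1 h2] := Hq w; split => //.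
  rewrite -h2; exact: (sumK_term _ (q w) k h1).
have Hp0k : forall k, 0 <= p0 k <= 1.
  move=> k; have [h1 h2] := Hp0; split => //; rewrite -h2; exact: (sumK_term _ p0 k h1).
have bd_dot : forall b, bounded_rv (fun w => dot (q w) b).
  move=> b; exists (sumK (fun _ : K => 1 * sumK (fun k => Rabs (b k)))) => w; apply: dot_abs_bound => k.
  - by move: (Hqk w k) => hh; rewrite Rabs_pos_eq; lra.
  - by apply: (sumK_term _ (fun k => Rabs (b k))) => j; apply: Rabs_pos.
have bd_dot2 : forall b, bounded_rv (fun w => dot (vsub (q w) p0) b).
  move=> b; exists (sumK (fun _ : K => 1 * sumK (fun k => Rabs (b k)))) => w; apply: dot_abs_bound => k.
  - by rewrite /vsub; move: (Hqk w k) (Hp0k k) => h1 h2; apply: Rabs_le; lra.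
  - by apply: (sumK_term _ (fun k => Rabs (b k))) => j; apply: Rabs_pos.
have bd_coord : forall k, bounded_rv (fun w => q w k).
  by move=> k; exists 1 => w; move: (Hqk w k) => hh; rewrite Rabs_pos_eq; lra.
have E_dot : forall b, E (fun w => dot (q w) b) = dot p0 b.
  move=> b.
  have Hbd : forall k, bounded_rv (fun w => q w k * b k).
    move=> k; have -> : (fun w => q w k * b k) = (fun w => b k * q w k) by apply: functional_extensionality => w; ring.
    exact: (bounded_scal _ (b k) _ (bd_coord k)).
  transitivity (lsum (fun k => E (fun w => q w k * b k)) (enum K)).
    exact: (E_lsum _ E HE (fun w k => q w k * b k) (enum K) Hbd).
  rewrite -sumK_lsum /dot; apply: sumK_ext => k.
  have -> : (fun w => q w k * b k) = (fun w => b k * q w k).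
    by apply: functional_extensionality => w; ring.
  by rewrite (E_scal _ E HE) ?Hmean; [ring | exact: bd_coord].
have sA := value_spec _ A _ hA.
have sS := value_spec _ (Astar A p0) _ hS.
have bd_v : forall B, compact_convex B -> (forall b, B b -> A b) -> bounded_rv (fun w => value B (q w)).
  move=> B hB hBA; exists (sumK (fun _ : K => 1 * M)) => w.
  have [[b [Hb <-]] _] := value_spec _ B (q w) hB.
  apply: dot_abs_bound => k; last by exact: HMk (hBA _ Hb).
  by move: (Hqk w k) => hh; rewrite Rabs_pos_eq; lra.
have bvA := bd_v A hA (fun b h => h).
have bvS := bd_v _ hS (fun b h => proj1 h).
have bd_norm : bounded_rv (fun w => norm (vsub (q w) p0)).
  exists (sqrt (sumK (fun _ : K => 1 * 1))) => w; rewrite Rabs_pos_eq; last exact: norm_nonneg.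
  apply: sqrt_le_1_alt; apply: Rle_trans (Rle_abs _) _; apply: dot_abs_bound => k;
  by rewrite /vsub; move: (Hqk w k) (Hp0k k) => h1 h2; apply: Rabs_le; lra.
have vA0 : value A p0 = c.
  have [[b [Hb Eb]] Ub] := sA p0; have := Ub a1 (proj1 Ha1); have := proj2 Ha1 b Hb.
  rewrite /c; lra.
have vS0 : value (Astar A p0) p0 = c.
  by have [[b [Hb <-]] _] := sS p0; exact: Hc.
rewrite /VoI vA0 vS0.
split; [|split].
-
  have H1 : forall w, value A (q w) <= c + (CM + 1) * norm (vsub (q w) p0).
    move=> w; have [[b [Hb <-]] _] := sA (q w); have := proj2 (sA p0) b Hb; rewrite vA0 => hb.
    have h : dot (q w) b - dot p0 b = dot (vsub (q w) p0) b by rewrite dot_vsub_l.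
    have h2 : Rabs (dot (vsub (q w) p0) b) <= sumK (fun _ : K => norm (vsub (q w) p0) * M).
      apply: dot_abs_bound => k; [exact: coord_le_norm | exact: HMk].
    rewrite sumK_scal -/CM in h2.
    have := norm_nonneg (vsub (q w) p0); have := Rle_abs (dot (vsub (q w) p0) b); nra.
  have := E_le _ E HE _ _ bvA (bounded_plus _ _ _ (bounded_const _ c) (bounded_scal _ (CM + 1) _ bd_norm)) H1.
  rewrite (E_plus _ E HE) ?(E_const _ E HE) ?(E_scal _ E HE) //; last by apply: bounded_scal.
  + lra.
  + exact: bounded_const.
-
  have H2 : forall w, value (Astar A p0) (q w) <= value A (q w).
    move=> w; have [[b [Hb <-]] _] := sS (q w); exact: (proj2 (sA (q w)) b (proj1 Hb)).
  have := E_le _ E HE _ _ bvS bvA H2; lra.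
-
  have mS0 : mS p0 = c.
    rewrite /mS (lsum_const_in _ _ _ c); last by apply/Forall_forall => x hx; apply: Hc; move/Forall_forall: HL; apply.
    rewrite -/n -Rmult_assoc Rinv_l ?Rmult_1_l //; exact: Rgt_not_eq _ _ hn.
  have H3 : forall w, mS (q w) + N (vsub (q w) p0) <= value (Astar A p0) (q w).
    move=> w.
    have Hf : Forall (fun a => dot (q w) a <= value (Astar A p0) (q w)) L.
      apply/Forall_forall => x hx; apply: (proj2 (sS (q w))); move/Forall_forall: HL; apply => //.
    have h := key_ineq (dot (q w)) L (value (Astar A p0) (q w)) hn Hf.
    change (INR (size L)) with n in h.
    change (/ n * lsum (dot (q w)) L) with (mS (q w)) in h.
    suff -> : N (vsub (q w) p0) = / (2 * n) * lsum (fun a => Rabs (dot (q w) a - mS (q w))) L by lra.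
    have hm : mS (vsub (q w) p0) = mS (q w) - c.
      rewrite -mS0 /mS -Rmult_minus_distr_l -lsum_minus; congr (_ * _).
      by apply: lsum_ext => a; rewrite dot_vsub_l.
    rewrite /N hm; congr (_ * _); apply: lsum_ext_in; apply/Forall_forall => x hx.
    rewrite dot_vsub_l (Hc x); last by move/Forall_forall: HL; apply.
    by congr Rabs; ring.
  have bmS : bounded_rv (fun w => mS (q w)).
    apply: bounded_scal; apply: bounded_lsum => a; exact: bd_dot.
  have bN : bounded_rv (fun w => N (vsub (q w) p0)).
    apply: bounded_scal; apply: bounded_lsum => a; apply: bounded_abs; apply: bounded_minus; first exact: bd_dot2.
    apply: bounded_scal; apply: bounded_lsum => a'; exact: bd_dot2.
  have := E_le _ E HE _ _ (bounded_plus _ _ _ bmS bN) bvS H3.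
  rewrite (E_plus _ E HE) //.
  have -> : E (fun w => mS (q w)) = c.
    rewrite /mS (E_scal _ E HE); last by apply: bounded_lsum => a; exact: bd_dot.
    rewrite (E_lsum _ E HE (fun w a => dot (q w) a)); last by move=> a; exact: bd_dot.
    rewrite -mS0 /mS; congr (_ * _); apply: lsum_ext => a; exact: E_dot.
  lra.
Qed.
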